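(* Let $a\ge 1$ and let $d$ be an odd integer with $d<a$. Then $U=\{(a,0),(0,0)\}\cup\{(c,d)\in\mathcal{B}\mid \max\{c,c+d\}<a\}$ is avoidable.
   Context: The bicyclic inverse semigroup is $\mathcal{B}=\{(a,b)\in\mathbb{Z}\times\mathbb{Z}\mid a\ge 0,\ a+b\ge 0\}$ with multiplication $(a,b)(c,d)=(\max\{c+d,a\}-d,\ b+d)$. A subset $U\subseteq\mathcal{B}$ is called avoidable if $\mathcal{B}$ can be partitioned into two subsets $A$ and $B$ such that no element of $U$ can be written as a product $xy$ of two distinct elements $x\neq y$ both in $A$, or both in $B$. *)

(* Defs.v *)
From Stdlib Require Import ZArith.
Open Scope Z_scope.

(* The bicyclic inverse semigroup B = {(a,b) in Z x Z | a >= 0, a + b >= 0}. *)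
Definition inB (p : Z * Z) : Prop := 0 <= fst p /\ 0 <= fst p + snd p.

Definition bmul (x y : Z * Z) : Z * Z :=
  let (a, b) := x in let (c, d) := y in (Z.max (c + d) a - d, b + d).

Definition avoidable (U : Z * Z -> Prop) : Prop :=
  exists A B' : Z * Z -> Prop,
    (forall p, A p -> inB p) /\ (forall p, B' p -> inB p) /\
    (forall p, inB p -> A p \/ B' p) /\
    (forall p, A p -> B' p -> False) /\
    (forall x y, x <> y -> A x -> A y -> ~ U (bmul x y)) /\
    (forall x y, x <> y -> B' x -> B' y -> ~ U (bmul x y)).

Definition U54 (a d : Z) (p : Z * Z) : Prop :=
  p = (a, 0) \/ p = (0, 0) \/
  (snd p = d /\ inB p /\ Z.max (fst p) (fst p + d) < a).

(* Main.v *)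
Require Import Defs.
From Stdlib Require Import ZArith Lia Bool.
Open Scope Z_scope.

Definition hc (D q : Z) : bool :=
  let m := Z.abs D in let r := q mod m in
  if r =? 0 then 0 <? q*D else m <? 2*r.

Lemma hc_diff D q s : Z.odd D = true -> (q+s=0 \/ q+s=D) -> ~(q=0/\s=0) -> hc D q <> hc D s.
Proof.
  intros hD hqs hnz.
  assert (Hodd : exists t, Z.abs D = 2*t+1 /\ (D = Z.abs D \/ D = - Z.abs D)).
  { apply Z.odd_spec in hD. destruct hD as [k Hk].
    destruct (Z_le_gt_dec 0 D).
    - exists k. lia.
    - exists (-k-1). lia. }
  destruct Hodd as [t [Ht He]].
  unfold hc. set (m := Z.abs D) in *.
  assert (Hm : 0 < m) by lia.
  pose proof (Z.div_mod q m ltac:(lia)) as Eq.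
  pose proof (Z.div_mod s m ltac:(lia)) as Es.
  pose proof (Z.mod_pos_bound q m Hm) as Bq.
  pose proof (Z.mod_pos_bound s m Hm) as Bs.
  set (r := q mod m) in *. set (r' := s mod m) in *.
  set (a := q / m) in *. set (b := s / m) in *.
  assert (Hr : (r = 0 /\ r' = 0) \/ r + r' = m).
  { assert (exists e, r + r' = m * e) as [e He2].
    { destruct hqs as [Hx|Hx]; destruct He as [Hy|Hy].
      - exists (-a-b). lia.
      - exists (-a-b). lia.
      - exists (1-a-b). lia.
      - exists (-1-a-b). lia. }
    assert (0 <= m*e < 2*m) by lia.
    assert (0 <= e) by (apply (Z.mul_nonneg_cancel_l m); lia).
    assert (e < 2) by (apply (Z.mul_lt_mono_pos_l m); lia).
    destruct (ltac:(lia) : e = 0 \/ e = 1) as [-> | ->]; lia. }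
  destruct Hr as [[Hr Hr2] | Hr].
  - rewrite Hr, Hr2. simpl.
    assert (Hmm : 0 < m*m) by (apply Z.mul_pos_pos; lia).
    assert (Kc : forall n, (0 <? n*(m*m)) = (0 <? n)).
    { intro n. apply Bool.eq_iff_eq_true. rewrite !Z.ltb_lt.
      apply Z.mul_pos_cancel_r; exact Hmm. }
    assert (Hq : q = m*a) by lia. assert (Hs : s = m*b) by lia.
    destruct He as [Hy|Hy].
    + replace (q*D) with (a*(m*m)) by (rewrite Hq, Hy; ring).
      replace (s*D) with (b*(m*m)) by (rewrite Hs, Hy; ring).
      rewrite !Kc.
      assert (a+b = 0 \/ a+b = 1) by (destruct hqs; [left|right]; apply (Z.mul_reg_l _ _ m); lia).
      assert (~(a=0/\b=0)) by (intros [? ?]; apply hnz; lia).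
      destruct (Z.ltb_spec 0 a); destruct (Z.ltb_spec 0 b); try discriminate; lia.
    + replace (q*D) with ((-a)*(m*m)) by (rewrite Hq, Hy; ring).
      replace (s*D) with ((-b)*(m*m)) by (rewrite Hs, Hy; ring).
      rewrite !Kc.
      assert (a+b = 0 \/ a+b = -1) by (destruct hqs; [left|right]; apply (Z.mul_reg_l _ _ m); lia).
      assert (~(a=0/\b=0)) by (intros [? ?]; apply hnz; lia).
      destruct (Z.ltb_spec 0 (-a)); destruct (Z.ltb_spec 0 (-b)); try discriminate; lia.
  - assert (r <> 0) by lia. assert (r' <> 0) by lia.
    replace (r =? 0) with false by (symmetry; apply Z.eqb_neq; auto).
    replace (r' =? 0) with false by (symmetry; apply Z.eqb_neq; auto).
    destruct (Z.ltb_spec m (2*r)); destruct (Z.ltb_spec m (2*r')); try discriminate; lia.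
Qed.
Definition col (N D : Z) (x : Z*Z) : bool :=
  if (fst x =? N) && (snd x =? 0) then true else hc D (snd x).

Lemma hc0 D : hc D 0 = false.
Proof. unfold hc. rewrite Zmod_0_l. reflexivity.
Qed.

Lemma key N D (ha : 1 <= N) (hd : Z.odd D = true) (hda : D < N) x y :
  inB x -> inB y -> x <> y -> col N D x = col N D y -> ~ U54 N D (bmul x y).
Proof.
  destruct x as [p q], y as [r s]. intros hx hy hne hc HU. unfold inB in hx, hy; simpl in hx, hy.
  unfold col in hc; simpl in hc. unfold bmul in HU. unfold U54 in HU; simpl in HU.
  assert (hD0 : D <> 0) by (intro; subst; discriminate).
  destruct ((p =? N) && (q =? 0)) eqn:Ex; destruct ((r =? N) && (s =? 0)) eqn:Ey.
  - apply andb_true_iff in Ex, Ey. destruct Ex as [E1 E2], Ey as [E3 E4].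
    apply Z.eqb_eq in E1, E2, E3, E4. subst. congruence.
  - apply andb_true_iff in Ex. destruct Ex as [E1 E2]. apply Z.eqb_eq in E1, E2. subst p q.
    destruct HU as [H|[H|[H1 [H2 H3]]]].
    + injection H as H1 H2. assert (s = 0) by lia. subst s. rewrite hc0 in hc. discriminate.
    + injection H as H1 H2. lia.
    + simpl in H1, H3. subst s. lia.
  - apply andb_true_iff in Ey. destruct Ey as [E1 E2]. apply Z.eqb_eq in E1, E2. subst r s.
    destruct HU as [H|[H|[H1 [H2 H3]]]].
    + injection H as H1 H2. assert (q = 0) by lia. subst q. rewrite hc0 in hc. discriminate.
    + injection H as H1 H2. lia.
    + simpl in H1, H3. rewrite Z.add_0_r in H1. subst q. lia.
  - assert (Hq : q + s = 0 \/ q + s = D).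
    { destruct HU as [H|[H|[H1 _]]]; [injection H| injection H| simpl in H1]; lia. }
    destruct (Z.eq_dec q 0) as [->|Hq0]; [destruct (Z.eq_dec s 0) as [->|Hs0]|].
    + destruct HU as [H|[H|[H1 _]]].
      * injection H as H1.
        destruct (Z.max_spec (r+0) p) as [[_ Hm]|[_ Hm]]; rewrite Hm in H1.
        -- assert (p = N) by lia. apply andb_false_iff in Ex; destruct Ex as [Ex|Ex]; apply Z.eqb_neq in Ex; lia.
        -- assert (r = N) by lia. apply andb_false_iff in Ey; destruct Ey as [Ey|Ey]; apply Z.eqb_neq in Ey; lia.
      * injection H as H1. apply hne.
        destruct (Z.max_spec (r+0) p) as [[? Hm]|[? Hm]]; rewrite Hm in H1;
        assert (r = 0) by lia; assert (p = 0) by lia; subst; reflexivity.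
      * simpl in H1. subst D. discriminate.
    + apply (hc_diff D 0 s hd Hq); [lia | exact hc].
    + apply (hc_diff D q s hd Hq); [lia | exact hc].
Qed.

Theorem proposition5p4 (a d : Z) (ha : 1 <= a) (hd : Z.odd d = true) (hda : d < a) :
  avoidable (U54 a d).
Proof.
  exists (fun p => inB p /\ col a d p = true), (fun p => inB p /\ col a d p = false).
  split; [intros z [Hz _]; exact Hz|].
  split; [intros z [Hz _]; exact Hz|].
  split; [intros z Hz; destruct (col a d z) eqn:E; auto|].
  split; [intros z [_ H1] [_ H2]; congruence|].
  split.
  - intros x y hne [ix Hx] [iy Hy]. apply key; auto. congruence.
  - intros x y hne [ix Hx] [iy Hy]. apply key; auto. congruence.
Qed.
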